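(* Consider the discrete first-price auction in the model with ties with $n=2$ bidders whose values are drawn independently and uniformly from $X=\{0,1,\dots,x\}$. There is no symmetric equilibrium $\beta$ with a value $v\in X$, $v\ge1$, and an integer $k\ge2$ such that $\beta(v-1)=\beta(v)-k$ and $\beta(v)\ge(2-\sqrt3)\,v$.
   Context: Model. Two risk-neutral bidders compete for one indivisible object. Values and bids lie in $X=\{0,1,2,\dots,x\}$; each bidder's value is drawn independently and uniformly from $X$. A (pure) strategy is a bidding function $\beta:X\to X$. In the model with ties, the higher bidder wins and, if the two bids are equal, each wins with probability $1/2$. In the first-price auction, a bidder with value $v_i$ bidding $b_i$ gets expected payoff $(v_i-b_i)\Pr(i\text{ wins})$. An equilibrium is a profile of bidding functions such that each bidder's bidding function maximises their expected payoff given the other's (a pure-strategy Bayes–Nash equilibrium) and such that no bidder uses a weakly dominated bidding function (a bidding function is weakly dominated if some other bidding function yields at least as high expected payoff against every opponent bidding function, and strictly higher against some). A symmetric equilibrium is an equilibrium in which both bidders use the same bidding function. *)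

(* Defs.v *)
From HB Require Import structures.
From mathcomp Require Import all_boot all_order all_algebra.
Set Implicit Arguments. Unset Strict Implicit. Unset Printing Implicit Defensive.
Import Order.TTheory GRing.Theory Num.Theory.
Local Open Scope ring_scope.

(* Values and bids range over X = {0,...,x}, represented by 'I_x.+1.
   A (pure) bidding function is a map X -> X. *)
Definition bidfun (x : nat) := 'I_x.+1 -> 'I_x.+1.

Definition win_prob (R : rcfType) (x : nat) (sigma : bidfun x) (b : 'I_x.+1) : R :=
  (\sum_(w < x.+1)
     (if (sigma w < b)%N then 1 else if sigma w == b then 2^-1 else 0))
  / x.+1%:R.

Definition payoff (R : rcfType) (x : nat) (v b : 'I_x.+1) (sigma : bidfun x) : R :=
  ((v : nat)%:R - (b : nat)%:R) * win_prob R sigma b.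

Definition exp_payoff (R : rcfType) (x : nat) (beta sigma : bidfun x) : R :=
  \sum_(v < x.+1) payoff R v (beta v) sigma / x.+1%:R.

Definition best_response (R : rcfType) (x : nat) (beta sigma : bidfun x) : Prop :=
  forall gamma : bidfun x, exp_payoff R gamma sigma <= exp_payoff R beta sigma.

Definition weakly_dominated (R : rcfType) (x : nat) (beta : bidfun x) : Prop :=
  exists gamma : bidfun x,
    (forall sigma : bidfun x, exp_payoff R beta sigma <= exp_payoff R gamma sigma) /\
    (exists sigma : bidfun x, exp_payoff R beta sigma < exp_payoff R gamma sigma).

Definition equilibrium (R : rcfType) (x : nat) (beta1 beta2 : bidfun x) : Prop :=
  [/\ best_response R beta1 beta2, best_response R beta2 beta1,
      ~ weakly_dominated R beta1 & ~ weakly_dominated R beta2].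

Definition symmetric_equilibrium (R : rcfType) (x : nat) (beta : bidfun x) : Prop :=
  equilibrium R beta beta.

(* Main.v *)
Require Import Defs.
From HB Require Import structures.
From mathcomp Require Import all_boot all_order all_algebra.
From mathcomp Require Import zify.
Import Order.TTheory GRing.Theory Num.Theory.
Local Open Scope ring_scope.

Lemma sum_lt N v : (\sum_(w < N) ((w < v)%N : nat) = minn v N)%N.
Proof.
elim: N => [|N IH]; first by rewrite big_ord0; lia.
rewrite big_ord_recr /= IH; case: (ltnP N v) => h /=; lia.
Qed.

Lemma arith0 (v b p bm1 gA gb : int) :
 (1 <= v)%R -> (1 <= p)%R -> bm1 = (b - 1)%R -> gA = (2 * v)%R -> gb = (2 * v + p)%R ->
 ((v - bm1) * gA <= (v - b) * gb)%R -> (b < v)%R.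
Proof. move=> v1 p1 e1 e2 e3 A; subst; nia. Qed.

Lemma arith (v b c k p q t g bm1 bp1 cp1 vm1 gA gD gc gb : int) :
 (0 <= c)%R -> (b = c + k)%R -> (2 <= k)%R -> (1 <= v)%R -> (1 <= p)%R -> (1 <= q)%R ->
 (c = 0 -> q = v) -> (v + p <= t + 1)%R ->
 bm1 = (b - 1)%R -> bp1 = (b + 1)%R -> cp1 = (c + 1)%R -> vm1 = (v - 1)%R ->
 gA = (2 * v)%R -> gD = (2 * v)%R -> (gc + q = 2 * v)%R -> gb = (2 * v + p)%R ->
 ((v - bm1) * gA <= (v - b) * gb)%R ->
 ((t - bp1) * g <= (t - b) * gb)%R -> (2 * v + 2 * p <= g)%R ->
 ((vm1 - cp1) * gD <= (vm1 - c) * gc)%R ->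
 ((v - c) * gc <= (v - b) * gb)%R -> False.
Proof.
move=> c0 eb k2 v1 p1 q1 c0q vt e1 e2 e3 e4 e5 e6 e7 e8 A C g2 D E.
have e7' : gc = (2 * v - q)%R by lia.
subst gA gD gc gb bm1 bp1 cp1 vm1.
have a1 : (2 * v <= (v - b) * p)%R by nia.
have ab : (1 <= v - b)%R by nia.
have C' : ((t - b - 1) * (2 * v + 2 * p) <= (t - b) * (2 * v + p))%R.
  have tb : (0 <= t - b - 1)%R by lia.
  have := ler_wpM2l tb g2. nia.
have C2 : (p * (v - b + p - 1) <= 2 * v + 2 * p)%R by nia.
have p3 : (p <= 3)%R by nia.
have : p = 1 \/ p = 2 \/ p = 3 by lia.
case=> [ep|[ep|ep]]; subst p.
- nia.
- nia.
- have ev : v = (3 * b)%R by nia.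
  subst v.
  have q2 : (q <= 2)%R by nia.
  have : q = 1 \/ q = 2 by lia.
  case=> [e|e]; subst q; [nia|].
  have kk : k = 2 by nia.
  have bb : b = 2 by nia.
  have cc : c = 0 by lia.
  have := c0q cc. lia.
Qed.

Lemma ordE n (a b : 'I_n) : (a == b) = (a == b :> nat).
Proof. by []. Qed.


Section S.
Variables (R : rcfType) (x : nat) (beta : bidfun x).
Hypothesis Hbr : best_response R beta beta.

Definition gv (c w : 'I_x.+1) : nat :=
  if (beta w < c)%N then 2 else if beta w == c then 1 else 0.
Ltac gvt := rewrite /gv ?ordE; repeat (match goal with |- context [if ?t then _ else _] => let H := fresh "H" in case: (boolP t) => H end); simpl; lia.
Definition G (c : 'I_x.+1) : nat := (\sum_(w < x.+1) gv c w)%N.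

Lemma wp c : win_prob R beta c = (G c)%:R / 2 / x.+1%:R.
Proof.
rewrite /win_prob /G natr_sum; apply: (congr1 (fun t => t / x.+1%:R)); rewrite mulr_suml.
apply: eq_bigr => w _; rewrite /gv.
case: ifP => _; first by rewrite divff // pnatr_eq0.
case: ifP => _; first by rewrite mul1r.
by rewrite mul0r.
Qed.

Lemma io (u c : 'I_x.+1) :
  ((u%:Z - c%:Z) * (G c)%:Z <= (u%:Z - (beta u)%:Z) * (G (beta u))%:Z)%R.
Proof.
have H := Hbr (fun w => if w == u then c else beta w).
rewrite /exp_payoff (bigD1 u) //= [X in _ <= X](bigD1 u) //= eqxx in H.
rewrite (eq_bigr (fun w => payoff R w (beta w) beta / x.+1%:R)) in H; last first.
  by move=> w /negbTE ->.
rewrite lerD2r ler_pM2r ?invr_gt0 ?ltr0n // /payoff in H.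
rewrite (wp c) (wp (beta u)) !mulrA ler_pM2r ?invr_gt0 ?ltr0n // in H.
rewrite ler_pM2r ?invr_gt0 ?ltr0n // in H.
rewrite -(ler_int R) !rmorphM !rmorphB /=.
exact: H.
Qed.

Lemma G_ge (c w : 'I_x.+1) : (gv c w <= G c)%N.
Proof. by rewrite /G (bigD1 w) //= leq_addr. Qed.

Lemma sum_ge (F : 'I_x.+1 -> nat) i : (F i <= \sum_(w < x.+1) F w)%N.
Proof. by rewrite (bigD1 i) //= leq_addr. Qed.

Lemma Gstrict (c c' w : 'I_x.+1) : (c' < c)%N -> beta w = c' -> (G c' < G c)%N.
Proof.
move=> lt ew.
rewrite /G (bigD1 w) //= [X in (_ < X)%N](bigD1 w) //=.
have h1 : (gv c' w < gv c w)%N by rewrite /gv ew ltnn eqxx lt.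
apply: (leq_trans (n := (gv c w + \sum_(i < x.+1 | i != w) gv c' i)%N)).
  by rewrite ltn_add2r.
rewrite leq_add2l; apply: leq_sum => i _; rewrite /gv.
case: ifP => h2; first by rewrite (ltn_trans h2 lt).
case: ifP => h3; last by [].
by move/eqP: h3 => ->; rewrite lt.
Qed.

Lemma mono (u u' : 'I_x.+1) : (u < u')%N -> (beta u <= beta u')%N.
Proof.
move=> uu; rewrite leqNgt; apply/negP => bl.
have h1 := io u (beta u'); have h2 := io u' (beta u).
have h3 := Gstrict (beta u) (beta u') u' bl erefl.
nia.
Qed.


Lemma core (v : 'I_x.+1) (k : nat) :
  (1 <= v)%N -> (2 <= k)%N -> (beta (inord v.-1) + k)%N = beta v -> False.
Proof.
move=> Hv Hk Hb.
set c := beta (inord v.-1) in Hb *. set b := beta v in Hb *.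
have ev1 : (inord v.-1 : 'I_x.+1) = v.-1 :> nat.
  by rewrite inordK //; have := ltn_ord v; lia.
have mono_lo : forall w : 'I_x.+1, (w < v)%N -> (beta w <= c)%N.
  move=> w wv; case: (ltnP w v.-1) => h.
    apply: (mono w (inord v.-1)); rewrite inordK; have := ltn_ord v; lia.
  have -> : w = inord v.-1 by apply: val_inj; rewrite /= inordK; have := ltn_ord v; lia.
  by [].
have mono_hi : forall w : 'I_x.+1, (v <= w)%N -> (b <= beta w)%N.
  move=> w vw; rewrite leq_eqVlt in vw; case/orP: vw => [/eqP e|h].
    by have -> : w = v by apply: val_inj.
  exact: mono.
set q := (\sum_(w < x.+1) ((beta w == c) : nat))%N.
set p := (\sum_(w < x.+1) ((beta w == b) : nat))%N.
have sv : (\sum_(w < x.+1) ((w < v)%N : nat))%N = v.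
  by rewrite sum_lt; have := ltn_ord v; lia.
have F1 : forall d : 'I_x.+1, (c < d)%N -> (d < b)%N -> G d = (2 * v)%N.
  move=> d h1 h2; rewrite /G -sv big_distrr /=; apply: eq_bigr => w _.
  case: (ltnP w v) => h; [have := mono_lo w h | have := mono_hi w h]; move=> hh; gvt.
have F2 : (G c + q)%N = (2 * v)%N.
  rewrite /G /q -big_split -sv big_distrr /=; apply: eq_bigr => w _.
  case: (ltnP w v) => h; [have := mono_lo w h | have := mono_hi w h]; move=> hh; gvt.
have F3 : G b = (2 * v + p)%N.
  rewrite /G /p -sv big_distrr -big_split /=; apply: eq_bigr => w _.
  case: (ltnP w v) => h; [have := mono_lo w h | have := mono_hi w h]; move=> hh; gvt.
have F4 : forall d : 'I_x.+1, (b < d)%N -> (2 * v + 2 * p <= G d)%N.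
  move=> d h1; rewrite /G /p -sv !big_distrr -big_split /=; apply: leq_sum => w _.
  case: (ltnP w v) => h; [have := mono_lo w h | have := mono_hi w h]; move=> hh; gvt.
have F5 : (c : nat) = 0%N -> G c = q.
  move=> c0; rewrite /G /q; apply: eq_bigr => w _; gvt.
have q1 : (1 <= q)%N.
  by have := sum_ge (fun w => ((beta w == c) : nat)) (inord v.-1); rewrite /= eqxx.
have p1 : (1 <= p)%N.
  by have := sum_ge (fun w => ((beta w == b) : nat)) v; rewrite /= eqxx.
have [t ht tmax] : exists2 t : 'I_x.+1, beta t = b & forall w, beta w = b -> (w <= t)%N.
  case: (@arg_maxnP _ v (fun i => beta i == b) (fun i : 'I_x.+1 => i : nat) (eqxx _)) => t /eqP ht tmax.
  by exists t => // w /eqP; exact: tmax.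
have ob := ltn_ord b; have ov := ltn_ord v; have oc := ltn_ord c; have ot := ltn_ord t.
have tv := tmax v erefl.
have vt : (v + p <= t.+1)%N.
  have st : (\sum_(w < x.+1) ((w < t.+1)%N : nat))%N = t.+1.
    by rewrite sum_lt; lia.
  rewrite -st -sv /p -big_split; apply: leq_sum => w _.
  case: (ltnP w v) => h; [move: (mono_lo w h)|move: (mono_hi w h)]; move=> hh;
  rewrite ordE; case: (boolP (beta w == b :> nat)) => e /=;
  [have := tmax w (val_inj (eqP e))| | have := tmax w (val_inj (eqP e))|]; lia.
have e1 : (b.-1 < x.+1)%N by lia.
have GA : G (inord b.-1) = (2 * v)%N by apply: F1; rewrite inordK; lia.
have A := io v (inord b.-1).
rewrite GA F3 (inordK e1) in A.
have bv : (b < v)%N.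
  have := arith0 (v%:Z) (b%:Z) (p%:Z) ((b.-1)%:Z) ((2 * v)%N%:Z)
      ((2 * v + p)%N%:Z).
  move=> H; suff : (b%:Z < v%:Z)%R by lia.
  apply: H; try lia; exact: A.
have e2 : (b.+1 < x.+1)%N by lia.
have GC : (2 * v + 2 * p <= G (inord b.+1))%N by apply: F4; rewrite inordK; lia.
have C := io t (inord b.+1).
rewrite ht F3 (inordK e2) in C.
have e3 : (c.+1 < x.+1)%N by lia.
have e4 : (v.-1 < x.+1)%N by lia.
have GD : G (inord c.+1) = (2 * v)%N by apply: F1; rewrite inordK; lia.
have D := io (inord v.-1) (inord c.+1).
rewrite GD (inordK e3) (inordK e4) in D.
have E := io v c.
rewrite F3 in E.
have := arith (v%:Z) (b%:Z) (c%:Z) (k%:Z) (p%:Z) (q%:Z) (t%:Z)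
  ((G (inord b.+1))%:Z) ((b.-1)%:Z) ((b.+1)%:Z) ((c.+1)%:Z)
  ((v.-1)%:Z) ((2 * v)%N%:Z) ((2 * v)%N%:Z) ((G c)%:Z)
  ((2 * v + p)%N%:Z).
move=> H; apply: H; try lia.
all: first [exact: A | exact: C | exact: D | exact: E |
  (move=> c0; have c0' : (c : nat) = 0%N by lia);
  have := F5 c0'; lia].
Qed.

End S.

Theorem lemma13 (R : rcfType) (x : nat) (beta : bidfun x) :
  symmetric_equilibrium R beta ->
  ~ (exists (v : 'I_x.+1) (k : nat),
       [/\ (1 <= v)%N, (2 <= k)%N,
           (beta (inord v.-1) + k)%N = beta v
         & (2 - Num.sqrt 3) * (v : nat)%:R <= (beta v : nat)%:R :> R]).
Proof.
move=> [Hbr _ _ _] [v [k [Hv Hk Hb _]]].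
exact: (@core R x beta Hbr v k Hv Hk Hb).
Qed.
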